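(* Let $k\ge1$ and let $\pi_0,\dots,\pi_{k-1}$ be (possibly random) policies. Then for every $s\in\mathcal S$, $$\sum_{t=0}^{k-1}\mathbb E_{\{\pi_t\}}\big[V^{\pi_t}(s)-V^{\pi^*}(s)\big]\;\le\;(1-\gamma)^{-1}\max_{s'\in\mathcal S}\mathbb E_{\{\pi_t\}}\big[g^{\pi_{[k]}}(s')\big],$$ where the aggregated advantage gap function is $g^{\pi_{[k]}}(s):=\max_{p\in\Delta_{|\mathcal A|}}\big\{-\sum_{t=0}^{k-1}\psi^{\pi_t}(s,p)\big\}$.
   Context: An infinite-horizon discounted MDP is given by a finite state space $\mathcal S$, a finite action space $\mathcal A$, transition probabilities $\mathcal P(s'\mid s,a)$, a cost $c:\mathcal S\times\mathcal A\to\mathbb R$ and a discount factor $\gamma\in[0,1)$. $\Delta_{|\mathcal A|}$ is the probability simplex over $\mathcal A$. A policy $\pi$ assigns $\pi(\cdot\mid s)\in\Delta_{|\mathcal A|}$ to each state. For each $s$, $p\mapsto h^{p}(s)$ is a closed convex function on $\Delta_{|\mathcal A|}$ (regularizer). $V^\pi(s)=\mathbb E\big[\sum_{t\ge0}\gamma^t(c(s_t,a_t)+h^{\pi(\cdot\mid s_t)}(s_t))\mid s_0=s,\ a_t\sim\pi(\cdot\mid s_t),\ s_{t+1}\sim\mathcal P(\cdot\mid s_t,a_t)\big]$, and $Q^\pi(s,a)$ is the same with $a_0=a$. $\pi^*$ is an optimal policy: $V^{\pi^*}(s)\le V^\pi(s)$ for all $\pi$, $s$. The advantage function is $\psi^\pi(s,p):=\langle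 Q^\pi(s,\cdot),p\rangle-V^\pi(s)+h^{p}(s)-h^{\pi(\cdot\mid s)}(s)$ for $p\in\Delta_{|\mathcal A|}$. $\mathbb E_{\{\pi_t\}}$ denotes expectation over the randomness of the policies. *)

(* Defs.v *)
From HB Require Import structures.
From mathcomp Require Import all_boot all_order all_algebra.
From mathcomp Require Import all_classical all_reals all_analysis.
Set Implicit Arguments. Unset Strict Implicit. Unset Printing Implicit Defensive.
Import Order.TTheory GRing.Theory Num.Theory.
Import numFieldNormedType.Exports.
Local Open Scope classical_set_scope.
Local Open Scope ring_scope.

Section MDP.
Variables (R : realType) (S A : finType).

Definition in_simplex (X : finType) (p : X -> R) : Prop :=
  (forall x, 0 <= p x) /\ \sum_(x : X) p x = 1.

Definition is_policy (pi : S -> A -> R) : Prop := forall s, in_simplex (pi s).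

(* transition kernel: P s a s' = P(s' | s, a) *)
Definition is_transition (P : S -> A -> S -> R) : Prop :=
  forall s a, in_simplex (P s a).

(* closed (lower semicontinuous relative to the simplex) convex real function
   on the simplex *)
Definition closed_convex_on_simplex (f : (A -> R) -> R) : Prop :=
  (forall p q (l : R), in_simplex p -> in_simplex q -> 0 <= l <= 1 ->
     f (fun a => l * p a + (1 - l) * q a) <= l * f p + (1 - l) * f q) /\
  (forall p, in_simplex p -> forall e : R, 0 < e -> exists2 del : R, 0 < del &
     forall q, in_simplex q -> (forall a, `|q a - p a| < del) -> f p - e < f q).

Variables (P : S -> A -> S -> R) (c : S -> A -> R) (h : S -> (A -> R) -> R)
  (gamma : R).

Definition stage_cost (pi : S -> A -> R) (s : S) : R :=
  \sum_(a : A) pi s a * c s a + h s (pi s).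

Fixpoint state_dist (pi : S -> A -> R) (mu : S -> R) (t : nat) : S -> R :=
  match t with
  | 0%N => mu
  | t'.+1 => fun s'' => \sum_(s' : S) state_dist pi mu t' s' *
                          \sum_(a : A) pi s' a * P s' a s''
  end.

Definition disc_value (pi : S -> A -> R) (mu : S -> R) : R :=
  limn (series (fun t : nat =>
    gamma ^+ t * \sum_(s' : S) state_dist pi mu t s' * stage_cost pi s')).

Definition Vf (pi : S -> A -> R) (s : S) : R :=
  disc_value pi (fun s' => if s' == s then 1 else 0).

(* Q^pi(s,a): same with a_0 = a (conditioning on the first transition) *)
Definition Qf (pi : S -> A -> R) (s : S) (a : A) : R :=
  c s a + h s (pi s) + gamma * disc_value pi (P s a).

Definition psi (pi : S -> A -> R) (s : S) (p : A -> R) : R :=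
  \sum_(a : A) Qf pi s a * p a - Vf pi s + h s p - h s (pi s).

Definition gap (k : nat) (pis : 'I_k -> S -> A -> R) (s : S) : R :=
  sup [set (- \sum_(t < k) psi (pis t) s p) | p in [set p | in_simplex p]].

End MDP.

(* Main.v *)
Require Import Defs.
From HB Require Import structures.
From mathcomp Require Import all_boot all_order all_algebra.
From mathcomp Require Import all_classical all_reals all_analysis.
From mathcomp Require Import ring lra.
Import Order.TTheory GRing.Theory Num.Theory.
Local Open Scope ring_scope.

Section Ex.
Context d (T : measurableType d) (R : realType) (Pr : probability T R).
Definition Ex (X : T -> R) : R := fine (expectation Pr X).

Lemma ExE X : X \in Lfun Pr 1%E -> (expectation Pr X) = (Ex X)%:E.
Proof. by move=> H; rewrite /Ex fineK // expectation_fin_num. Qed.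

Lemma LfD X Y : X \in Lfun Pr 1%E -> Y \in Lfun Pr 1%E -> (fun w => X w + Y w) \in Lfun Pr 1%E.
Proof. by move=> HX HY; exact: ((Lfun_addr_closed Pr (lexx (1%E : extended R))).2 _ _ HX HY). Qed.

Lemma LfN X : X \in Lfun Pr 1%E -> (fun w => - X w) \in Lfun Pr 1%E.
Proof. by move=> HX; exact: (Lfun_oppr_closed HX). Qed.

Lemma LfZ (a : R) X : X \in Lfun Pr 1%E -> (fun w => a * X w) \in Lfun Pr 1%E.
Proof. move=> HX; have H := @Lfun_scale _ _ _ Pr X a 1 (lexx _); suff -> : (fun w => a * X w) = a \o* X by exact: H. by apply: funext => w; rewrite /GRing.mulr_fun mulrC. Qed.

Lemma Lfc (a : R) : (fun w : T => a) \in Lfun Pr 1%E.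
Proof. exact: (Lfun_cst Pr a 1). Qed.

Lemma ExD X Y : X \in Lfun Pr 1%E -> Y \in Lfun Pr 1%E -> Ex (fun w => X w + Y w) = Ex X + Ex Y.
Proof. move=> HX HY; have E := expectationD HX HY; rewrite /Ex.
rewrite (_ : (fun w => X w + Y w) = (X \+ Y)) // E (ExE _ HX) (ExE _ HY) //. Qed.

Lemma ExZ (a : R) X : X \in Lfun Pr 1%E -> Ex (fun w => a * X w) = a * Ex X.
Proof. move=> HX; have E := expectationZl a HX; rewrite /Ex.
rewrite (_ : (fun w => a * X w) = (a \o* X)) ?E ?(ExE _ HX) //.
by apply: funext => w; rewrite /GRing.mulr_fun mulrC. Qed.

Lemma Exc (a : R) : Ex (fun w => a) = a.
Proof. by rewrite /Ex (expectation_cst Pr a). Qed.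

Lemma ExN X : X \in Lfun Pr 1%E -> Ex (fun w => - X w) = - Ex X.
Proof.
move=> HX; have -> : (fun w => - X w) = (fun w => (-1) * X w).
  by apply: funext => w; rewrite mulN1r.
by rewrite ExZ // mulN1r.
Qed.

Lemma Lf_sum (I : Type) (r : seq I) (F : I -> T -> R) :
  (forall i, F i \in Lfun Pr 1%E) -> (fun w => \sum_(i <- r) F i w) \in Lfun Pr 1%E.
Proof.
move=> HF; elim: r => [|i r IH].
  by under eq_fun do rewrite big_nil; apply: Lfc.
by under eq_fun do rewrite big_cons; apply: LfD.
Qed.

Lemma Ex_sum (I : Type) (r : seq I) (F : I -> T -> R) :
  (forall i, F i \in Lfun Pr 1%E) -> Ex (fun w => \sum_(i <- r) F i w) = \sum_(i <- r) Ex (F i).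
Proof.
move=> HF; elim: r => [|i r IH].
  by under eq_fun do rewrite big_nil; rewrite Exc big_nil.
under eq_fun do rewrite big_cons.
by rewrite ExD ?big_cons ?IH //; apply: Lf_sum.
Qed.

Lemma Ex_ge0 X : (forall w, 0 <= X w) -> 0 <= Ex X.
Proof. by move=> H; rewrite /Ex fine_ge0 // expectation_ge0. Qed.
End Ex.
Arguments Ex {d T R} Pr X.
Arguments ExE {d T R} Pr {X}.
Arguments LfD {d T R} Pr {X Y}.
Arguments LfN {d T R} Pr {X}.
Arguments LfZ {d T R} Pr a {X}.
Arguments Lfc {d T R} Pr a.
Arguments ExD {d T R} Pr {X Y}.
Arguments ExZ {d T R} Pr a {X}.
Arguments Exc {d T R} Pr a.
Arguments ExN {d T R} Pr {X}.
Arguments Lf_sum {d T R} Pr {I} r {F}.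
Arguments Ex_sum {d T R} Pr {I} r {F}.
Arguments Ex_ge0 {d T R} Pr {X}.

Section Conv.
Local Open Scope ring_scope.
Variables (R : realType) (A : finType).

Lemma simplex_le1' (p : A -> R) x : in_simplex p -> p x <= 1.
Proof.
move=> [p0 p1]; rewrite -p1 (bigD1 x) //= lerDl; apply: sumr_ge0 => ? _; exact: p0.
Qed.

Definition edelta (a : A) : A -> R := fun b => if b == a then 1 else 0.

Lemma edelta_simplex a : in_simplex (edelta a).
Proof.
split; first by move=> b; rewrite /edelta; case: ifP.
rewrite (bigD1 a) //= /edelta eqxx big1 ?addr0 // => b /negbTE -> //.
Qed.

Variable f : (A -> R) -> R.
Hypothesis Hf : forall p q (l : R), in_simplex p -> in_simplex q -> 0 <= l <= 1 ->
     f (fun a => l * p a + (1 - l) * q a) <= l * f p + (1 - l) * f q.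

Lemma convex_ub : exists M, forall q, in_simplex q -> f q <= M.
Proof.
set M := \sum_a `|f (edelta a)|.
have Me : forall a, f (edelta a) <= M.
  move=> a; apply: (le_trans (ler_norm _)).
  rewrite /M (bigD1 a) //= lerDl; exact: sumr_ge0.
have nz : forall (X : {set A}) (q : A -> R), in_simplex q -> (forall b, b \notin X -> q b = 0) ->
    exists a, a \in X.
  move=> X q hq hs; case: (set_0Vmem X) => [X0|[a Ha]]; last by exists a.
  exfalso; have : \sum_b q b = 0 by apply: big1 => b _; apply: hs; rewrite X0 inE.
  by rewrite hq.2 => /eqP; rewrite oner_eq0.
have key : forall n (X : {set A}) (q : A -> R), (#|X| <= n)%N -> in_simplex q ->
    (forall b, b \notin X -> q b = 0) -> f q <= M.
  elim=> [|n IH] X q hX hq hs.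
    have [a Ha] := nz X q hq hs.
    by move: hX; rewrite leqn0 => /eqP/cards0_eq X0; move: Ha; rewrite X0 inE.
  have [a Ha] := nz X q hq hs.
  have qa1 := simplex_le1' _ a hq.
  have qa0 := hq.1 a.
  have hrest : \sum_(b | b != a) q b = 1 - q a.
    by have := hq.2; rewrite (bigD1 a) //= => H; lra.
  case: (eqVneq (q a) 1) => [qa1e|qan1].
    have -> : q = edelta a.
      apply: funext => b; rewrite /edelta; case: eqP => [->//|/eqP nb].
      apply: (@psumr_eq0P _ _ (fun b => b != a) q (fun b _ => hq.1 b) _ b nb).
      by rewrite hrest qa1e subrr.
    exact: Me.
  have lt1 : q a < 1 by rewrite lt_neqAle qan1 qa1.
  have pos : 0 < 1 - q a by rewrite subr_gt0.
  set q' := fun b => if b == a then 0 else q b / (1 - q a).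
  have hq' : in_simplex q'.
    split.
      move=> b; rewrite /q'; case: ifP => // _; apply: divr_ge0; [exact: hq.1|exact: ltW].
    rewrite (bigD1 a) //= /q' eqxx add0r.
    rewrite (eq_bigr (fun b => q b / (1 - q a))); last by move=> b /negbTE ->.
    by rewrite -mulr_suml hrest divff // gt_eqF.
  have fq' : f q' <= M.
    apply: (IH (X :\ a)) => //.
      by move: hX; rewrite (cardsD1 a X) Ha.
    move=> b; rewrite /q' in_setD1 negb_and negbK; case: eqP => //= _ Hb.
    by rewrite hs // mul0r.
  have -> : q = (fun b => q a * edelta a b + (1 - q a) * q' b).
    apply: funext => b; rewrite /edelta /q'; case: eqP => [->|_].
      by rewrite mulr1 mulr0 addr0.
    by rewrite mulr0 add0r mulrC divfK // gt_eqF.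
  apply: (le_trans (Hf (edelta a) q' (q a) (edelta_simplex a) hq' _)); first by rewrite qa0 qa1.
  have E1 := Me a.
  have : q a * f (edelta a) + (1 - q a) * f q' <= q a * M + (1 - q a) * M.
    by apply: lerD; apply: ler_wpM2l => //; exact: ltW.
  move=> H; apply: (le_trans H); rewrite -mulrDl addrC subrK mul1r //.
exists M => q hq; apply: (key #|A| [set: A]%SET) => //; first exact: max_card.
by move=> b; rewrite inE.
Qed.

Lemma convex_lb : exists L, forall p, in_simplex p -> L <= f p.
Proof.
have [M HM] := convex_ub.
set nA : R := #|A|%:R.
set lam : R := (nA + 1)^-1.
set c0 := fun _ : A => nA^-1.
exists ((f c0 - (1 - lam) * M) / lam) => p hp.
have [a0 _] : exists a0 : A, true.
  case: (pickP (fun _ : A => true)) => [a _|H]; first by exists a.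
  exfalso; have := hp.2; rewrite big1 => [/eqP|b _]; [by rewrite eq_sym oner_eq0 | by have := H b].
have nA0 : 0 < nA by rewrite ltr0n; apply/card_gt0P; exists a0.
have lam0 : 0 < lam by rewrite invr_gt0; lra.
have lam1 : lam < 1 by rewrite invf_lt1; lra.
have hlam : nA^-1 - lam = (nA * (nA + 1))^-1.
  rewrite /lam; field; apply/andP; split; apply/lt0r_neq0; lra.
have hlam0 : 0 <= nA^-1 - lam by rewrite hlam invr_ge0; apply: mulr_ge0; lra.
set q := fun a => (nA^-1 - lam * p a) / (1 - lam).
have hq : in_simplex q.
  split.
    move=> a; rewrite /q; apply: divr_ge0; last lra.
    have := simplex_le1' _ a hp; have := hp.1 a => h0 h1.
    have : lam * p a <= lam by rewrite -[leRHS]mulr1 ler_wpM2l //; lra.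
    lra.
  rewrite /q -mulr_suml sumrB -mulr_sumr hp.2 mulr1 sumr_const.
  rewrite -mulr_natr (_ : (#|xpredT|%:R : R) = nA) //.
  rewrite /lam; field; apply/andP; split; apply/lt0r_neq0; try lra.
have Ec : c0 = (fun a => lam * p a + (1 - lam) * q a).
  apply: funext => a; rewrite /c0 /q; field; apply/andP; split; apply/lt0r_neq0; [lra|exact: nA0].
have H := Hf p q lam hp hq ltac:(apply/andP; split; lra).
rewrite -Ec in H.
have := HM q hq => Hq.
rewrite ler_pdivrMr //.
have : (1 - lam) * f q <= (1 - lam) * M by apply: ler_wpM2l => //; lra.
nra.
Qed.
End Conv.

Section MDP2.
Import numFieldNormedType.Exports.
Local Open Scope classical_set_scope.
Local Open Scope ring_scope.
Variables (R : realType) (S A : finType).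
Variables (P : S -> A -> S -> R) (c : S -> A -> R) (h : S -> (A -> R) -> R)
  (gamma : R).
Hypothesis hg0 : 0 <= gamma.
Hypothesis hg1 : gamma < 1.
Hypothesis hP : is_transition P.

Definition delta (s : S) : S -> R := fun s' => if s' == s then 1 else 0.
Definition Pm (pi : S -> A -> R) (s s'' : S) : R := \sum_(a : A) pi s a * P s a s''.

Lemma simplex_le1 (X : finType) (p : X -> R) x : in_simplex p -> p x <= 1.
Proof.
move=> [p0 p1]; rewrite -p1 (bigD1 x) //= lerDl; apply: sumr_ge0 => ? _; exact: p0.
Qed.

Lemma simplex_abs (X : finType) (p : X -> R) (r : X -> R) : in_simplex p ->
  `|\sum_x p x * r x| <= \sum_x `|r x|.
Proof.
move=> hp; apply: (le_trans (ler_norm_sum _ _ _)); apply: ler_sum => x _.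
rewrite normrM ger0_norm; last exact: hp.1.
rewrite -[leRHS]mul1r ler_wpM2r //; exact: simplex_le1.
Qed.

Lemma sum_delta (f : S -> R) s : \sum_s' delta s s' * f s' = f s.
Proof.
rewrite (bigD1 s) //= /delta eqxx mul1r big1 ?addr0 // => s' /negbTE ->.
by rewrite mul0r.
Qed.

Lemma sum_delta' (f : S -> R) s'' : \sum_s f s * delta s s'' = f s''.
Proof.
rewrite (bigD1 s'') //= /delta eqxx mulr1 big1 ?addr0 // => s' /negbTE.
by rewrite eq_sym => ->; rewrite mulr0.
Qed.

Lemma sd_simplex pi mu t : is_policy pi -> in_simplex mu ->
  in_simplex (state_dist P pi mu t).
Proof.
move=> hpi hmu; elim: t => [//|t [IH0 IH1]] /=; split.
  move=> s''; apply: sumr_ge0 => s' _; apply: mulr_ge0 => //.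
  apply: sumr_ge0 => a _; apply: mulr_ge0; [exact: (hpi s').1 | exact: (hP s' a).1].
rewrite exchange_big /= -[RHS]IH1; apply: eq_bigr => s' _.
rewrite -mulr_sumr exchange_big /=.
rewrite (eq_bigr (fun a => pi s' a)) ?(hpi s').2 ?mulr1 // => a _.
by rewrite -mulr_sumr (hP s' a).2 mulr1.
Qed.

Lemma sd_lin pi mu t s'' :
  state_dist P pi mu t s'' = \sum_s mu s * state_dist P pi (delta s) t s''.
Proof.
elim: t s'' => [|t IH] s'' /=; first by rewrite sum_delta'.
under eq_bigr do rewrite IH mulr_suml.
rewrite exchange_big /=; apply: eq_bigr => s _.
by rewrite mulr_sumr; apply: eq_bigr => s' _; rewrite mulrA.
Qed.

Lemma sd_shift pi mu t :
  state_dist P pi mu t.+1 = state_dist P pi (fun s'' => \sum_s' mu s' * Pm pi s' s'') t.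
Proof.
elim: t => [//|t IH].
change (state_dist P pi mu t.+2) with
  (fun s'' => \sum_s' state_dist P pi mu t.+1 s' * Pm pi s' s'').
by rewrite IH.
Qed.


Lemma cvg_lin (I : finType) (a : I -> R) (f : I -> nat -> R) (l : I -> R) :
  (forall i, f i @ \oo --> l i) ->
  (fun n => \sum_i a i * f i n) @ \oo --> \sum_i a i * l i.
Proof.
move=> H; rewrite unlock /reducebig.
elim: (index_enum I) => [|i r IH] /=.
  exact: cvg_cst.
apply: cvgD => //; apply: cvgMr; exact: H.
Qed.

Definition term pi mu (t : nat) : R :=
  gamma ^+ t * \sum_s' state_dist P pi mu t s' * stage_cost c h pi s'.

Lemma seriesE (u : nat -> R) n : series u n = \sum_(k < n) u k.
Proof. by rewrite seriesEord. Qed.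

Lemma term_cvg pi s : is_policy pi -> cvgn (series (term pi (delta s))).
Proof.
move=> hpi; apply: normed_cvg.
set M := \sum_s' `|stage_cost c h pi s'|.
have M0 : 0 <= M by apply: sumr_ge0 => ? _.
apply: (@series_le_cvg _ _ (geometric M gamma)).
- by move=> n /=.
- by move=> n; rewrite /geometric mulr_ge0 // exprn_ge0.
- move=> n /=; rewrite /geometric /term normrM ger0_norm ?exprn_ge0 // mulrC.
  apply: ler_wpM2r; first exact: exprn_ge0.
  apply: simplex_abs; apply: sd_simplex => //.
  split; first by move=> s'; rewrite /delta; case: ifP.
  by rewrite (eq_bigr (fun s' => delta s s' * 1)) ?sum_delta // => ? _; rewrite mulr1.
- apply: is_cvg_geometric_series; rewrite ger0_norm //.
Qed.

Lemma term_lin pi mu t : term pi mu t = \sum_s mu s * term pi (delta s) t.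
Proof.
rewrite /term.
under eq_bigr do rewrite sd_lin mulr_suml.
rewrite exchange_big /= mulr_sumr; apply: eq_bigr => s _.
rewrite mulrCA; congr (_ * _); rewrite mulr_sumr; apply: eq_bigr => s' _.
by rewrite mulrA.
Qed.

Lemma disc_lin pi mu : is_policy pi ->
  series (term pi mu) @ \oo --> \sum_s mu s * Vf P c h gamma pi s.
Proof.
move=> hpi.
have -> : series (term pi mu) = (fun n => \sum_s mu s * series (term pi (delta s)) n).
  apply: funext => n; rewrite seriesE.
  under eq_bigr do rewrite term_lin.
  rewrite exchange_big /=; apply: eq_bigr => s _.
  by rewrite seriesE mulr_sumr.
apply: cvg_lin => s; exact: term_cvg.
Qed.


Lemma bellman pi s : is_policy pi ->
  Vf P c h gamma pi s = stage_cost c h pi s + gamma * \sum_s' Pm pi s s' * Vf P c h gamma pi s'.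
Proof.
move=> hpi.
have E : (fun n => series (term pi (delta s)) n.+1) =
    (fun n => stage_cost c h pi s + gamma * series (term pi (Pm pi s)) n).
  apply: funext => n; rewrite !seriesE big_ord_recl /=.
  congr (_ + _).
    by rewrite /term expr0 mul1r /= sum_delta.
  rewrite mulr_sumr; apply: eq_bigr => i _.
  rewrite /term sd_shift exprS -mulrA /=.
  have -> : (fun s'' => \sum_s' delta s s' * Pm pi s' s'') = Pm pi s.
    by apply: funext => s''; rewrite sum_delta.
  by [].
have H1 : (fun n => series (term pi (delta s)) n.+1) @ \oo -->
    stage_cost c h pi s + gamma * \sum_s' Pm pi s s' * Vf P c h gamma pi s'.
  rewrite E; apply: cvgD; first exact: cvg_cst.
  apply: cvgMr; exact: disc_lin.
have H2 := H1; rewrite (@cvg_shiftS _ (series (term pi (delta s)))) in H2.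
have -> : Vf P c h gamma pi s = limn (series (term pi (delta s))) by [].
exact: (cvg_lim (@Rhausdorff R) H2).
Qed.

Lemma Qf_eq pi s a : is_policy pi ->
  Qf P c h gamma pi s a = c s a + h s (pi s) + gamma * \sum_s' P s a s' * Vf P c h gamma pi s'.
Proof.
move=> hpi; rewrite /Qf; congr (_ + _ * _).
have -> : disc_value P c h gamma pi (P s a) = limn (series (term pi (P s a))) by [].
exact: (cvg_lim (@Rhausdorff R) (disc_lin pi (P s a) hpi)).
Qed.

Lemma psi_eq pi s p : is_policy pi -> in_simplex p ->
  psi P c h gamma pi s p = \sum_a p a * c s a + h s p +
     gamma * \sum_s' (\sum_a p a * P s a s') * Vf P c h gamma pi s' - Vf P c h gamma pi s.
Proof.
move=> hpi hp; rewrite /psi.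
under eq_bigr do rewrite Qf_eq //.
set X := fun a => \sum_s' P s a s' * Vf P c h gamma pi s'.
rewrite (eq_bigr (fun a => p a * c s a + h s (pi s) * p a + gamma * (p a * X a))); last first.
  by move=> a _; rewrite /X; ring.
rewrite !big_split /= -!mulr_sumr hp.2.
have -> : \sum_a p a * X a = \sum_s' (\sum_a p a * P s a s') * Vf P c h gamma pi s'.
  rewrite /X; under eq_bigr do rewrite mulr_sumr.
  rewrite exchange_big /=; apply: eq_bigr => s' _.
  by rewrite mulr_suml; apply: eq_bigr => a _; rewrite mulrA.
ring.
Qed.

Lemma pd_step pi pistar s : is_policy pi -> is_policy pistar ->
  Vf P c h gamma pi s - Vf P c h gamma pistar s =
  - psi P c h gamma pi s (pistar s) +
  gamma * \sum_s' Pm pistar s s' * (Vf P c h gamma pi s' - Vf P c h gamma pistar s').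
Proof.
move=> hpi hps.
rewrite psi_eq // ?(hps s) // (bellman pistar s hps).
under [X in _ = _ + gamma * X]eq_bigr do rewrite mulrBr.
rewrite sumrB /stage_cost /Pm; ring.
Qed.

End MDP2.
Arguments Pm {R S A} P pi s s0 : rename.
Arguments pd_step {R S A P c h gamma} hg0 hg1 hP { pi0 pis0 } s hpi hps : rename.


Theorem proposition2p3 (R : realType) (S A : finType)
  (P : S -> A -> S -> R) (c : S -> A -> R) (h : S -> (A -> R) -> R) (gamma : R)
  (pistar : S -> A -> R)
  (d : measure_display) (T : measurableType d) (Pr : probability T R)
  (k : nat) (pis : T -> 'I_k -> S -> A -> R) :
  0 <= gamma < 1 ->
  is_transition P ->
  (forall s, closed_convex_on_simplex (h s)) ->
  is_policy pistar ->
  (forall pi, is_policy pi -> forall s,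
     Vf P c h gamma pistar s <= Vf P c h gamma pi s) ->
  (0 < k)%N ->
  (forall w t, is_policy (pis w t)) ->
  (forall (t : 'I_k) s,
     Pr.-integrable setT (fun w => (Vf P c h gamma (pis w t) s)%:E)) ->
  (forall s, Pr.-integrable setT (fun w => (gap P c h gamma (pis w) s)%:E)) ->
  forall s : S,
    (\sum_(t < k) 'E_Pr[fun w => (Vf P c h gamma (pis w t) s
                                  - Vf P c h gamma pistar s)%R]
     <= ((1 - gamma)^-1)%:E *
        \big[Order.max/-oo]_(s' : S) 'E_Pr[fun w => gap P c h gamma (pis w) s' : R])%E.
Proof.
move=> /andP[hg0 hg1] hP hh hps _ hk hpis hV hG s.
set Vs := fun s => Vf P c h gamma pistar s.
set u := fun s w => \sum_(t < k) (Vf P c h gamma (pis w t) s - Vs s).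
set gg := fun s w => gap P c h gamma (pis w) s.
have LV : forall t s, (fun w => Vf P c h gamma (pis w t) s) \in Lfun Pr 1%E.
  by move=> t s'; apply/(Lfun1_integrable Pr _).2; exact: hV.
have LF : forall s t, (fun w => Vf P c h gamma (pis w t) s - Vs s) \in Lfun Pr 1%E.
  move=> s' t; exact: (LfD Pr (LV t s') (Lfc Pr (- Vs s'))).
have Lu : forall s, u s \in Lfun Pr 1%E.
  move=> s'; exact: (Lf_sum Pr (index_enum 'I_k) (LF s')).
have Lg : forall s, gg s \in Lfun Pr 1%E.
  by move=> s'; apply/(Lfun1_integrable Pr _).2; exact: hG.
have gap_ge : forall w s, - \sum_(t < k) psi P c h gamma (pis w t) s (pistar s) <= gg s w.
  move=> w s'; rewrite /gg /gap.
  have [L HL] := @convex_lb _ _ _ (hh s').1.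
  apply: sup_upper_bound; last by exists (pistar s') => //; exact: hps.
  split; first by exists (- \sum_(t < k) psi P c h gamma (pis w t) s' (pistar s')); exists (pistar s') => //; exact: hps.
  exists (\sum_(t < k) (\sum_a `|Qf P c h gamma (pis w t) s' a| + Vf P c h gamma (pis w t) s'
     - L + h s' (pis w t s'))).
  move=> y [p hp <-]; rewrite -sumrN; apply: ler_sum => t _.
  rewrite /psi.
  have H1 : `|\sum_a Qf P c h gamma (pis w t) s' a * p a| <= \sum_a `|Qf P c h gamma (pis w t) s' a|.
    by under eq_bigr do rewrite mulrC; exact: simplex_abs.
  have H3 := ler_norm (- \sum_a Qf P c h gamma (pis w t) s' a * p a); rewrite normrN in H3.
  have H2 := HL p hp.
  lra.
have pw : forall w (s : S), u s w <= gg s w + gamma * \sum_s' Pm P pistar s s' * u s' w.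
  move=> w s'; rewrite /u.
  under eq_bigr do rewrite (pd_step hg0 hg1 hP s' (hpis w _) hps).
  rewrite big_split /= -mulr_sumr.
  have -> : \sum_(t < k) \sum_s'' Pm P pistar s' s'' *
       (Vf P c h gamma (pis w t) s'' - Vf P c h gamma pistar s'') =
     \sum_s'' Pm P pistar s' s'' * \sum_(t < k) (Vf P c h gamma (pis w t) s'' - Vs s'').
    rewrite exchange_big /=; apply: eq_bigr => s'' _; by rewrite mulr_sumr.
  apply: lerD => //; rewrite sumrN; exact: gap_ge.
set EU := fun s => Ex Pr (u s).
set EG := fun s => Ex Pr (gg s).
have ineqE : forall s, EU s <= EG s + gamma * \sum_s' Pm P pistar s s' * EU s'.
  move=> s'.
  have L1 : (fun w => \sum_s'' Pm P pistar s' s'' * u s'' w) \in Lfun Pr 1%E.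
    apply: (Lf_sum Pr (index_enum S) (F := fun s'' w => Pm P pistar s' s'' * u s'' w)).
    move=> s''; exact: (LfZ Pr _ (Lu s'')).
  have L2 : (fun w => gamma * \sum_s'' Pm P pistar s' s'' * u s'' w) \in Lfun Pr 1%E.
    exact: (LfZ Pr _ L1).
  have L3 : (fun w => - u s' w) \in Lfun Pr 1%E by exact: (LfN Pr (Lu s')).
  have L4 : (fun w => gamma * \sum_s'' Pm P pistar s' s'' * u s'' w + - u s' w) \in Lfun Pr 1%E.
    exact: (LfD Pr L2 L3).
  have H0 := Ex_ge0 Pr (X := fun w => gg s' w + (gamma * \sum_s'' Pm P pistar s' s'' * u s'' w + - u s' w))
     (fun w => ltac:(have := pw w s'; lra)).
  rewrite (ExD Pr (Lg s') L4) (ExD Pr L2 L3) (ExN Pr (Lu s')) (ExZ Pr _ L1) in H0.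
  rewrite (Ex_sum Pr (index_enum S) (F := fun s'' w => Pm P pistar s' s'' * u s'' w)) in H0; last first.
    move=> s''; exact: (LfZ Pr _ (Lu s'')).
  rewrite (eq_bigr (fun s'' => Pm P pistar s' s'' * EU s'')) in H0; last first.
    move=> s'' _; exact: (ExZ Pr _ (Lu s'')).
  rewrite /EU /EG; lra.
have [s0 _ Hs0] := @arg_maxP _ R S s xpredT EU isT.
have Pm0 : forall s1 s2, 0 <= Pm P pistar s1 s2.
  move=> s1 s2; apply: sumr_ge0 => a _; apply: mulr_ge0; [exact: (hps s1).1|exact: (hP s1 a).1].
have rowsum : forall s1, \sum_s2 Pm P pistar s1 s2 = 1.
  move=> s1; rewrite /Pm exchange_big /=.
  under eq_bigr do rewrite -mulr_sumr (hP s1 _).2 mulr1.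
  exact: (hps s1).2.
have HX : \sum_s' Pm P pistar s0 s' * EU s' <= EU s0.
  apply: (@le_trans _ _ (\sum_s' Pm P pistar s0 s' * EU s0)).
    apply: ler_sum => s' _; apply: ler_wpM2l => //; exact: Hs0.
  by rewrite -mulr_suml rowsum mul1r.
have HY : gamma * \sum_s' Pm P pistar s0 s' * EU s' <= gamma * EU s0.
  exact: ler_wpM2l.
have Hmax : EU s0 <= EG s0 / (1 - gamma).
  rewrite ler_pdivlMr; last lra.
  have := ineqE s0; nra.
have Hs : EU s <= EU s0 by exact: Hs0.
rewrite (eq_bigr (fun t => (Ex Pr (fun w => Vf P c h gamma (pis w t) s - Vs s))%:E)); last first.
  by move=> t _; exact: (ExE Pr (LF s t)).
rewrite (eq_bigr (fun s' => (EG s')%:E)); last first.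
  by move=> s' _; exact: (ExE Pr (Lg s')).
rewrite sumEFin.
have -> : \sum_(t < k) Ex Pr (fun w => Vf P c h gamma (pis w t) s - Vs s) = EU s.
  by rewrite /EU /u (Ex_sum Pr (index_enum 'I_k) (LF s)).
apply: (@le_trans _ _ ((1 - gamma)^-1 * EG s0)%:E).
  rewrite lee_fin mulrC; exact: (le_trans Hs Hmax).
rewrite EFinM; apply: lee_wpmul2l.
  by rewrite lee_fin invr_ge0; lra.
exact: (le_bigmax _ (fun s' => (EG s')%:E) s0).
Qed.
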